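(* For integers $k\ge1$ and $q\ge2$, \[ \sum_{n=1}^\infty\frac{P_k(H_n,H_n^{(2)},\dots,H_n^{(k)})}{n(n+1)\cdots(n+q-1)}=\frac{1}{(q-1)!}\Big[\zeta(k+1)-\sum_{j=1}^{q-2}\frac{1}{j^{k+1}}\Big]. \]
   Context: For integers $r\ge1$ and $n\ge0$, $H_n^{(r)}=\sum_{j=1}^n j^{-r}$ and $H_n=H_n^{(1)}$. For $n\ge1$, $P_n(y_1,\dots,y_n)=\sum_{m_1+2m_2+\cdots=n}\frac{(-1)^{m_2+m_4+\cdots}}{m_1!m_2!\cdots}\prod_{i\ge1}(y_i/i)^{m_i}$. $\zeta$ is the Riemann zeta function. *)

(* Defs.v *)
From Stdlib Require Import Reals List Arith Factorial.
Import ListNotations.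
Open Scope R_scope.

Fixpoint Hr (r n : nat) : R :=
  match n with
  | O => 0
  | S m => Hr r m + / (INR (S m)) ^ r
  end.

Fixpoint vecs (len bound : nat) : list (list nat) :=
  match len with
  | O => [ [] ]
  | S l => flat_map (fun a => map (fun v => a :: v) (vecs l bound)) (seq 0 (S bound))
  end.

(* For a list m = [m_1; ...; m_k] (the entry at position i-1 is m_i):
   weighted size  m_1 + 2 m_2 + ... + k m_k *)
Fixpoint wsize_from (i : nat) (m : list nat) : nat :=
  match m with
  | [] => O
  | a :: t => (i * a + wsize_from (S i) t)%nat
  end.

Fixpoint evensum_from (i : nat) (m : list nat) : nat :=
  match m with
  | [] => O
  | a :: t => ((if Nat.even i then a else O) + evensum_from (S i) t)%nat
  end.

Fixpoint prodterm_from (i : nat) (y : nat -> R) (m : list nat) : R :=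
  match m with
  | [] => 1
  | a :: t => (y i / INR i) ^ a / INR (fact a) * prodterm_from (S i) y t
  end.

(* The partitions of n, encoded as multiplicity vectors (m_1,...,m_n)
   with m_1 + 2 m_2 + ... + n m_n = n (multiplicities m_i with i > n vanish). *)
Definition partitions (n : nat) : list (list nat) :=
  filter (fun m => Nat.eqb (wsize_from 1 m) n) (vecs n n).

(* P_n(y_1,...,y_n) = sum_{m_1+2m_2+...=n} (-1)^{m_2+m_4+...}/(m_1! m_2! ...)
                        prod_i (y_i/i)^{m_i}.
   The variables are given as a function y : nat -> R, y i = y_i. *)
Definition Ppoly (n : nat) (y : nat -> R) : R :=
  fold_right Rplus 0
    (map (fun m => (-1) ^ (evensum_from 1 m) * prodterm_from 1 y m) (partitions n)).

Fixpoint rising (n q : nat) : R :=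
  match q with
  | O => 1
  | S p => rising n p * INR (n + p)
  end.

(* Main.v *)
Require Import Defs.
From Stdlib Require Import Reals Arith Factorial List Lia Lra ZArith ClassicalEpsilon.
Import ListNotations.
Open Scope R_scope.

Fixpoint ssum (f : nat -> R) (n : nat) : R :=
  match n with O => 0 | S m => ssum f m + f m end.

Lemma ssum_ext f g n : (forall a, (a < n)%nat -> f a = g a) -> ssum f n = ssum g n.
Proof. induction n; simpl; intros H; auto. rewrite IHn by (intros; apply H; lia). rewrite H by lia. auto. Qed.

Lemma ssum_plus f g n : ssum (fun a => f a + g a) n = ssum f n + ssum g n.
Proof. induction n; simpl; [ring|rewrite IHn; ring]. Qed.

Lemma ssum_scal c f n : ssum (fun a => c * f a) n = c * ssum f n.
Proof. induction n; simpl; [ring|rewrite IHn; ring]. Qed.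

Lemma ssum_zero f n : (forall a, (a < n)%nat -> f a = 0) -> ssum f n = 0.
Proof. intros H. rewrite (ssum_ext f (fun _ => 0)) by auto. induction n; simpl; auto. rewrite IHn by (intros; apply H; lia). ring. Qed.

Lemma ssum_Sl f n : ssum f (S n) = f O + ssum (fun a => f (S a)) n.
Proof. induction n; simpl in *; [ring|]. rewrite IHn. ring. Qed.

Lemma ssum_range f m p : (m <= p)%nat -> (forall a, (m <= a)%nat -> (a < p)%nat -> f a = 0) -> ssum f p = ssum f m.
Proof. intros Hm H. induction p. replace m with O by lia. auto.
  destruct (Nat.eq_dec m (S p)). subst; auto. simpl. rewrite IHp by (try lia; intros; apply H; lia).
  rewrite H by lia. ring. Qed.

Lemma ssum_swap (F : nat -> nat -> R) n m :
  ssum (fun a => ssum (fun b => F a b) m) n = ssum (fun b => ssum (fun a => F a b) n) m.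
Proof. induction n; simpl. symmetry; apply ssum_zero; auto.
  rewrite IHn. rewrite <- ssum_plus. auto. Qed.

Definition sumL {A} (f : A -> R) (l : list A) : R := fold_right (fun x acc => f x + acc) 0 l.

Lemma sumL_app {A} (f : A -> R) l1 l2 : sumL f (l1 ++ l2) = sumL f l1 + sumL f l2.
Proof. induction l1; simpl; [ring|]. unfold sumL in *. simpl. rewrite IHl1. ring. Qed.

Lemma sumL_flat_map {A B} (f : B -> R) (h : A -> list B) l :
  sumL f (flat_map h l) = sumL (fun a => sumL f (h a)) l.
Proof. induction l; simpl; auto. rewrite sumL_app. unfold sumL at 3. simpl. rewrite IHl. auto. Qed.

Lemma sumL_map {A B} (f : B -> R) (h : A -> B) l : sumL f (map h l) = sumL (fun x => f (h x)) l.
Proof. induction l; simpl; auto. unfold sumL in *; simpl. rewrite IHl. auto. Qed.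

Lemma sumL_ext {A} (f g : A -> R) l : (forall x, f x = g x) -> sumL f l = sumL g l.
Proof. intros H; induction l; simpl; auto. unfold sumL in *; simpl. rewrite IHl, H. auto. Qed.

Lemma sumL_scal {A} c (f : A -> R) l : sumL (fun x => c * f x) l = c * sumL f l.
Proof. induction l; unfold sumL in *; simpl; [ring|]. rewrite IHl. ring. Qed.

Lemma sumL_zero {A} (l : list A) : sumL (fun _ => 0) l = 0.
Proof. induction l; unfold sumL in *; simpl; [ring|]. rewrite IHl. ring. Qed.

Lemma sumL_seq f s n : sumL f (seq s n) = ssum (fun a => f (s + a)%nat) n.
Proof. revert s; induction n; intros s; auto. rewrite ssum_Sl. change (f s + sumL f (seq (S s) n) = f (s + 0)%nat + ssum (fun a => f (s + S a)%nat) n). rewrite IHn. rewrite Nat.add_0_r. f_equal. apply ssum_ext. intros. f_equal. lia. Qed.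

Lemma fold_map_filter {A} (g : A -> R) p l :
  fold_right Rplus 0 (map g (filter p l)) = sumL (fun m => if p m then g m else 0) l.
Proof. induction l; simpl; auto. unfold sumL in *; simpl. destruct (p a); simpl; rewrite IHl; ring. Qed.

Section Comb.
Variable y : nat -> R.

Definition term i m := (-1) ^ (evensum_from i m) * prodterm_from i y m.
Definition cc i a := (-1) ^ (if Nat.even i then a else O) * ((y i / INR i) ^ a / INR (fact a)).

Lemma term_cons i a t : term i (a :: t) = cc i a * term (S i) t.
Proof. unfold term, cc. simpl. rewrite pow_add. ring. Qed.

Definition G i l b n := sumL (fun m => if Nat.eqb (wsize_from i m) n then term i m else 0) (vecs l b).

Fixpoint Q (l i n : nat) : R :=
  match l with
  | O => if Nat.eqb 0 n then 1 else 0
  | S l' => ssum (fun a => if Nat.leb (i * a) n then cc i a * Q l' (S i) (n - i * a) else 0) (S n)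
  end.

Lemma G_Q l : forall i b n, (1 <= i)%nat -> (n <= b)%nat -> G i l b n = Q l i n.
Proof.
  induction l; intros i b n Hi Hb.
  - unfold G. simpl. unfold sumL; simpl. unfold term; simpl. destruct n; ring.
  - unfold G. cbn [vecs]. rewrite sumL_flat_map, sumL_seq. cbn [Q].
    rewrite (ssum_range _ (S n) (S b)); [ | lia | intros a H1 H2; simpl;
      rewrite sumL_map; transitivity (sumL (fun _ : list nat => 0) (vecs l b)); [|apply sumL_zero]; apply sumL_ext; intros v; simpl;
      destruct (Nat.eqb_spec (i * a + wsize_from (S i) v) n); auto; nia].
    apply ssum_ext. intros a Ha. simpl. rewrite sumL_map.
    destruct (Nat.leb_spec (i*a) n).
    + rewrite <- (IHl (S i) b) by lia. unfold G. rewrite <- sumL_scal. apply sumL_ext. intros v. simpl.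
      rewrite term_cons.
      destruct (Nat.eqb_spec (i * a + wsize_from (S i) v) n);
      destruct (Nat.eqb_spec (wsize_from (S i) v) (n - i*a)); try lia; ring.
    + transitivity (sumL (fun _ : list nat => 0) (vecs l b)); [|apply sumL_zero]. apply sumL_ext. intros v. simpl.
      destruct (Nat.eqb_spec (i * a + wsize_from (S i) v) n); auto; lia.
Qed.

Lemma Ppoly_Q n : Ppoly n y = Q n 1 n.
Proof. rewrite <- (G_Q n 1 n) by lia. unfold Ppoly, partitions. rewrite fold_map_filter. reflexivity. Qed.


Definition sg j : R := if Nat.even j then -1 else 1.

Lemma cc0 i : cc i 0 = 1.
Proof. unfold cc. destruct (Nat.even i); simpl; field. Qed.

Lemma cc_step i a : (1 <= i)%nat -> cc i (S a) * INR (i * S a) = sg i * y i * cc i a.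
Proof. intros Hi. unfold cc, sg.
  assert (INR i <> 0) by (apply not_0_INR; lia).
  assert (INR (fact a) <> 0) by (apply not_0_INR; apply fact_neq_0).
  assert (INR (S a) <> 0) by (apply not_0_INR; lia).
  rewrite mult_INR. change (fact (S a)) with (S a * fact a)%nat. rewrite mult_INR.
  destruct (Nat.even i); simpl; field; auto.
Qed.

Lemma Q_small l : forall i n, (n < i)%nat -> Q l i n = if Nat.eqb 0 n then 1 else 0.
Proof.
  induction l; intros i n H; auto. cbn [Q]. rewrite ssum_Sl.
  rewrite ssum_zero. 2:{ intros a Ha. destruct (Nat.leb_spec (i * S a) n); auto; nia. }
  rewrite Nat.mul_0_r, Nat.sub_0_r. simpl (Nat.leb 0 n). rewrite cc0, IHl by lia. ring.
Qed.

Lemma Q_len l : forall l' i n, (n < i + l)%nat -> (n < i + l')%nat -> Q l i n = Q l' i n.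
Proof.
  induction l; intros l' i n H1 H2.
  - rewrite Q_small by lia. rewrite Q_small by lia. auto.
  - destruct l'. rewrite Q_small by lia. rewrite Q_small by lia. auto.
    cbn [Q]. apply ssum_ext. intros a Ha. destruct (Nat.leb_spec (i*a) n); auto.
    rewrite (IHl l'); auto; lia.
Qed.

Lemma NQ l : forall i n, (1 <= i)%nat -> INR n * Q l i n =
  ssum (fun d => if Nat.leb (i+d) n then sg (i+d) * y (i+d) * Q l i (n - (i+d)) else 0) l.
Proof.
  induction l; intros i n Hi.
  - simpl. destruct n; simpl; ring.
  - rewrite ssum_Sl. rewrite Nat.add_0_r.
    transitivity (ssum (fun a => if Nat.leb (i*a) n then cc i a * INR (i*a) * Q l (S i) (n - i*a) else 0) (S n)
      + ssum (fun a => if Nat.leb (i*a) n then cc i a * (INR (n - i*a) * Q l (S i) (n - i*a)) else 0) (S n)).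
    { rewrite <- ssum_plus. cbn [Q] . rewrite <- ssum_scal. apply ssum_ext. intros a Ha.
      destruct (Nat.leb_spec (i*a) n); [|ring].
      replace (INR n) with (INR (i*a) + INR (n - i*a)) by (rewrite <- plus_INR; f_equal; lia). ring. }
    f_equal.
    + rewrite ssum_Sl. rewrite Nat.mul_0_r. simpl (INR 0).
      replace ((if Nat.leb 0 n then cc i 0 * 0 * Q l (S i) (n - 0) else 0)) with 0
        by (destruct (Nat.leb 0 n); ring). rewrite Rplus_0_l.
      rewrite (ssum_ext _ (fun a => if Nat.leb (i * S a) n then sg i * y i * (cc i a * Q l (S i) (n - i * S a)) else 0)).
      2:{ intros a Ha. destruct (Nat.leb (i * S a) n); [|ring]. rewrite cc_step by auto. ring. }
      destruct (Nat.leb_spec i n).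
      * cbn [Q]. rewrite <- ssum_scal.
        rewrite <- (ssum_range _ (S (n - i)) (S n)); [|lia|].
        2:{ intros a H1 H2. destruct (Nat.leb_spec (i*a) (n-i)); [nia|ring]. }
        rewrite <- (ssum_range _ n (S n)); [|lia|].
        2:{ intros a H1 H2. destruct (Nat.leb_spec (i * S a) n); [nia|ring]. }
        apply ssum_ext. intros a Ha.
        destruct (Nat.leb_spec (i*a) (n-i)); destruct (Nat.leb_spec (i * S a) n); try nia; try ring.
        replace (n - i - i * a)%nat with (n - i * S a)%nat by nia. ring.
      * apply ssum_zero. intros a Ha. destruct (Nat.leb_spec (i * S a) n); auto; nia.
    + rewrite (ssum_ext _ (fun a => ssum (fun d => if Nat.leb (i * a + (S i + d)) n then
           cc i a * (sg (S i + d) * y (S i + d) * Q l (S i) (n - i * a - (S i + d))) else 0) l)).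
      2:{ intros a Ha. destruct (Nat.leb_spec (i*a) n).
          - rewrite IHl by lia. rewrite <- ssum_scal. apply ssum_ext. intros d Hd.
            destruct (Nat.leb_spec (S i + d) (n - i*a)); destruct (Nat.leb_spec (i * a + (S i + d)) n);
              try lia; ring.
          - symmetry. apply ssum_zero. intros d Hd. destruct (Nat.leb_spec (i * a + (S i + d)) n); auto; lia. }
      rewrite ssum_swap. apply ssum_ext. intros d Hd.
      replace (i + S d)%nat with (S i + d)%nat by lia.
      destruct (Nat.leb_spec (S i + d) n).
      * cbn [Q]. rewrite <- ssum_scal.
        rewrite <- (ssum_range _ (S (n - (S i + d))) (S n)); [|lia|].
        2:{ intros a H1 H2. destruct (Nat.leb_spec (i*a) (n - (S i + d))); [nia|ring]. }
        apply ssum_ext. intros a Ha.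
        destruct (Nat.leb_spec (i*a) (n - (S i + d))); destruct (Nat.leb_spec (i * a + (S i + d)) n);
          try lia; try ring.
        replace (n - (S i + d) - i * a)%nat with (n - i * a - (S i + d))%nat by lia. ring.
      * apply ssum_zero. intros a Ha. destruct (Nat.leb_spec (i * a + (S i + d)) n); auto; lia.
Qed.

Lemma NP k : (1 <= k)%nat -> INR k * Q k 1 k =
  ssum (fun d => sg (S d) * y (S d) * Q (k - S d) 1 (k - S d)) k.
Proof. intros Hk. rewrite NQ by lia. apply ssum_ext. intros d Hd.
  destruct (Nat.leb_spec (1 + d) k); [|lia]. simpl (1 + d)%nat.
  rewrite (Q_len k (k - S d)) by lia. auto. Qed.
End Comb.

Fixpoint Ek (n k : nat) : R :=
  match n with
  | O => match k with O => 1 | S _ => 0 end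
  | S n' => Ek n' k + match k with O => 0 | S k' => Ek n' k' / INR (S n') end
  end.

Lemma Ek_0 n : Ek n 0 = 1.
Proof. induction n; simpl; auto. rewrite IHn; ring. Qed.

Lemma sg_SS d : sg (S (S d)) = - sg (S d).
Proof. unfold sg. change (Nat.even (S (S d))) with (Nat.even d). rewrite Nat.even_succ, <- Nat.negb_even. destruct (Nat.even d); simpl; ring. Qed.

Lemma NE n : forall k, (1 <= k)%nat -> INR k * Ek n k =
  ssum (fun d => sg (S d) * Hr (S d) n * Ek n (k - S d)) k.
Proof.
  induction n; intros k Hk.
  - destruct k; [lia|]. simpl Ek at 1. rewrite Rmult_0_r. symmetry. apply ssum_zero.
    intros; simpl. ring.
  - destruct k as [|k]; [lia|].
    set (x := / INR (S n)).
    assert (HE : forall m, Ek (S n) m = Ek n m + match m with O => 0 | S m' => x * Ek n m' end).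
    { intros m; cbn [Ek]. destruct m; auto. unfold x. unfold Rdiv. ring. }
    assert (HH : forall j, Hr j (S n) = Hr j n + x ^ j).
    { intros j. cbn [Hr]. unfold x. rewrite pow_inv. auto. }
    rewrite (ssum_ext _ (fun d => sg (S d) * Hr (S d) n * Ek n (S k - S d)
       + sg (S d) * Hr (S d) n * (match (k - d)%nat with O => 0 | S m' => x * Ek n m' end)
       + sg (S d) * x ^ S d * Ek n (S k - S d)
       + sg (S d) * x ^ S d * (match (k - d)%nat with O => 0 | S m' => x * Ek n m' end))).
    2:{ intros d Hd. rewrite HE, HH. simpl (S k - S d)%nat. ring. }
    rewrite !ssum_plus. rewrite <- IHn by lia.
    replace (ssum (fun d => sg (S d) * Hr (S d) n * match (k - d)%nat with O => 0 | S m' => x * Ek n m' end) (S k))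
      with (x * (INR k * Ek n k)).
    2:{ destruct k.
        - simpl. ring.
        - rewrite IHn by lia. rewrite <- ssum_scal.
          rewrite (ssum_range _ (S k) (S (S k))); [|lia|].
          2:{ intros a H1 H2. replace (S k - a)%nat with O by lia. ring. }
          apply ssum_ext. intros d Hd. replace (S k - d)%nat with (S (S k - S d)) by lia. ring. }
    replace (ssum (fun d => sg (S d) * x ^ S d * match (k - d)%nat with O => 0 | S m' => x * Ek n m' end) (S k))
      with (- ssum (fun d => sg (S (S d)) * x ^ S (S d) * Ek n (S k - S (S d))) k).
    2:{ rewrite (ssum_range _ k (S k)); [|lia|].
        2:{ intros a H1 H2. replace (k - a)%nat with O by lia. ring. }
        rewrite <- (Rmult_1_l (ssum _ k)) at 1. rewrite Ropp_mult_distr_l. rewrite <- ssum_scal.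
        apply ssum_ext. intros d Hd. replace (k - d)%nat with (S (k - S d)) by lia.
        rewrite sg_SS. simpl. ring. }
    rewrite ssum_Sl. simpl (S k - 1)%nat. rewrite Nat.sub_0_r.
    rewrite HE. rewrite S_INR. unfold sg at 1. simpl. ring.
Qed.

Lemma QE n : forall k, Q (fun r => Hr r n) k 1 k = Ek n k.
Proof.
  intros k. induction k as [k IH] using lt_wf_ind.
  destruct k. { simpl. rewrite Ek_0. auto. }
  apply (Rmult_eq_reg_l (INR (S k))); [|apply not_0_INR; lia].
  rewrite NP by lia. rewrite NE by lia. apply ssum_ext. intros d Hd.
  rewrite IH by lia. auto.
Qed.

Lemma Ppoly_Ek k n : Ppoly k (fun r => Hr r n) = Ek n k.
Proof. rewrite Ppoly_Q. apply QE. Qed.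

Lemma rising_pos m q : (1 <= m)%nat -> 0 < rising m q.
Proof. intros H; induction q; simpl. lra. apply Rmult_lt_0_compat; auto. apply lt_0_INR; lia. Qed.

Lemma rising_S m p : rising m (S p) = INR m * rising (S m) p.
Proof. induction p. simpl. rewrite Nat.add_0_r. ring.
  change (rising m (S (S p))) with (rising m (S p) * INR (m + S p)). rewrite IHp.
  change (rising (S m) (S p)) with (rising (S m) p * INR (S m + p)).
  replace (S m + p)%nat with (m + S p)%nat by lia. ring. Qed.

Lemma rising_1 p : rising 1 p = INR (fact p).
Proof. induction p. simpl. auto. change (rising 1 (S p)) with (rising 1 p * INR (1 + p)).
  rewrite IHp. change (fact (S p)) with (S p * fact p)%nat. rewrite mult_INR. simpl (1+p)%nat. ring. Qed.

Lemma rising_key m p : (1 <= m)%nat -> INR p / rising m (S p) + / rising (S m) p = / rising m p.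
Proof. intros H.
  assert (A := rising_pos m p H). assert (B := rising_pos (S m) p ltac:(lia)).
  assert (E1 : rising m (S p) = rising m p * INR (m + p)) by reflexivity.
  assert (E2 := rising_S m p).
  assert (0 < INR m) by (apply lt_0_INR; lia).
  rewrite E2. rewrite E1 in E2. rewrite plus_INR in E2.
  assert (0 <= INR p) by apply pos_INR.
  replace (/ rising (S m) p) with (INR m / (INR m * rising (S m) p)) by (field; lra).
  replace (INR p / (INR m * rising (S m) p) + INR m / (INR m * rising (S m) p)) with
    ((INR m + INR p) / (INR m * rising (S m) p)) by (field; lra).
  rewrite <- E2. field. lra.
Qed.

Lemma rising_ge m p : (1 <= m)%nat -> (1 <= p)%nat -> INR m <= rising m p.
Proof. intros Hm Hp. destruct p; [lia|]. rewrite rising_S.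
  assert (1 <= rising (S m) p).
  { clear Hp. induction p. simpl; lra. change (rising (S m) (S p)) with (rising (S m) p * INR (S m + p)).
    assert (1 <= INR (S m + p)) by (apply (le_INR 1); lia). nra. }
  assert (0 <= INR m) by apply pos_INR. nra. Qed.

Lemma rising_fact2 m Q : (1 <= m)%nat -> (2 <= Q)%nat ->
  INR (fact Q) * (INR m * INR (S m)) <= 2 * rising m Q.
Proof. intros Hm HQ. induction Q as [|Q IH]. lia.
  destruct (Nat.eq_dec Q 1). subst.
  replace (rising m 2) with (INR m * INR (S m)) by (cbn [rising]; rewrite Nat.add_0_r, Nat.add_1_r; ring).
  change (fact 2) with 2%nat. assert (INR 2 = 2) by (simpl; ring). rewrite H. lra.
  specialize (IH ltac:(lia)).
  change (fact (S Q)) with (S Q * fact Q)%nat. rewrite mult_INR.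
  change (rising m (S Q)) with (rising m Q * INR (m + Q)).
  assert (INR (S Q) <= INR (m + Q)) by (apply le_INR; lia).
  assert (0 <= INR (fact Q) * (INR m * INR (S m))).
  { apply Rmult_le_pos. apply pos_INR. apply Rmult_le_pos; apply pos_INR. }
  assert (0 <= INR (S Q)) by apply pos_INR.
  nra. Qed.

Lemma rising_succ_le m q : (1 <= m)%nat -> rising (S m) q <= (INR q + 1) * rising m q.
Proof. intros Hm.
  assert (E : INR m * rising (S m) q = rising m q * INR (m + q)).
  { rewrite <- rising_S. reflexivity. }
  assert (A := rising_pos m q Hm). assert (B := rising_pos (S m) q ltac:(lia)).
  assert (1 <= INR m) by (apply (le_INR 1); lia). rewrite plus_INR in E.
  assert (0 <= INR q) by apply pos_INR.
  assert (0 <= INR q * (INR m - 1) * rising m q) by (repeat apply Rmult_le_pos; lra).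
  assert (INR m * rising (S m) q <= INR m * ((INR q + 1) * rising m q)) by nra.
  apply Rmult_le_reg_l in H2; lra. Qed.

Lemma Rdiv_le_0_compat a b : 0 <= a -> 0 < b -> 0 <= a / b.
Proof. intros. unfold Rdiv. apply Rmult_le_pos; auto. apply Rlt_le, Rinv_0_lt_compat; auto. Qed.

Lemma Ek_nonneg n k : 0 <= Ek n k.
Proof. revert k; induction n; intros k; cbn [Ek]. destruct k; lra.
  destruct k. specialize (IHn O); lra.
  assert (0 <= Ek n k / INR (S n)). { apply Rdiv_le_0_compat; auto. apply lt_0_INR; lia. }
  specialize (IHn (S k)). lra. Qed.

Lemma Ek_mono n k : Ek n k <= Ek (S n) k.
Proof. cbn [Ek]. destruct k. lra.
  assert (0 <= Ek n k / INR (S n)). { apply Rdiv_le_0_compat. apply Ek_nonneg. apply lt_0_INR; lia. }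
  lra. Qed.

Lemma Ek_0S k : Ek 0 (S k) = 0.
Proof. reflexivity. Qed.

Lemma Ek_bound k : forall n, Ek n k <= 4 ^ k * sqrt (INR n + 1).
Proof.
  induction k; intros n.
  - rewrite Ek_0, pow_O, Rmult_1_l. rewrite <- sqrt_1 at 1. apply sqrt_le_1_alt.
    assert (0 <= INR n) by apply pos_INR. lra.
  - induction n.
    + rewrite Ek_0S. apply Rmult_le_pos. apply pow_le; lra. apply sqrt_pos.
    + cbn [Ek]. set (s := sqrt (INR n + 1)).
      assert (Hn : 0 <= INR n) by apply pos_INR.
      assert (Hs : 1 <= s). { unfold s. rewrite <- sqrt_1 at 1. apply sqrt_le_1_alt. lra. }
      assert (Hs2 : s * s = INR n + 1) by (unfold s; apply sqrt_sqrt; lra).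
      assert (H1 : Ek n k / INR (S n) <= 4 ^ k * s / (s * s)).
      { rewrite Hs2, S_INR. unfold Rdiv. apply Rmult_le_compat_r.
        apply Rlt_le, Rinv_0_lt_compat; lra. apply IHk. }
      assert (H2 : s + / (4 * s) <= sqrt (INR (S n) + 1)).
      { rewrite S_INR. apply Rsqr_incr_0_var. 2: apply sqrt_pos.
        rewrite Rsqr_sqrt by lra. unfold Rsqr.
        replace ((s + / (4 * s)) * (s + / (4 * s))) with (s * s + / 2 + / (16 * (s * s))) by (field; lra).
        rewrite Hs2. assert (/ (16 * (INR n + 1)) <= / 2).
        { apply Rinv_le_contravar; lra. } lra. }
      change (4 ^ S k) with (4 * 4 ^ k) in *. 
      assert (4 ^ k * s / (s * s) = 4 ^ k * / s) by (field; lra).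
      assert (0 < 4 ^ k) by (apply pow_lt; lra).
      assert (4 * 4 ^ k * (s + / (4 * s)) = 4 * 4 ^ k * s + 4 ^ k * / s) by (field; lra).
      assert (4 * 4 ^ k * (s + / (4 * s)) <= 4 * 4 ^ k * sqrt (INR (S n) + 1)).
      { apply Rmult_le_compat_l; lra. }
      assert (IHn2 : Ek n (S k) <= 4 * 4 ^ k * s) by exact IHn. lra.
Qed.

Lemma cv_ext u v l : (forall n, u n = v n) -> Un_cv u l -> Un_cv v l.
Proof. intros H C eps He. destruct (C eps He) as [N HN]. exists N. intros n Hn. rewrite <- H. auto. Qed.

Lemma cv_shift u l : Un_cv (fun N => u (S N)) l -> Un_cv u l.
Proof. intros C eps He. destruct (C eps He) as [N HN]. exists (S N). intros n Hn.
  destruct n. lia. apply HN. lia. Qed.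

Lemma cv_shift_fwd u l : Un_cv u l -> Un_cv (fun N => u (S N)) l.
Proof. intros C eps He. destruct (C eps He) as [N HN]. exists N. intros n Hn. apply HN. lia. Qed.

Lemma cv_const c : Un_cv (fun _ => c) c.
Proof. intros eps He. exists O. intros. unfold R_dist. rewrite Rminus_diag, Rabs_R0. auto. Qed.

Lemma cv_squeeze u v : (forall n, 0 <= u n <= v n) -> Un_cv v 0 -> Un_cv u 0.
Proof. intros H C eps He. destruct (C eps He) as [N HN]. exists N. intros n Hn.
  specialize (HN n Hn). specialize (H n). unfold R_dist in *. rewrite Rminus_0_r in *.
  rewrite Rabs_right in * by lra. lra. Qed.

Lemma cv_isqrt : Un_cv (fun N => / sqrt (INR (S N))) 0.
Proof.
  apply (cv_ext (fun N => / sqrt (INR (S N)))). auto.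
  apply cv_infty_cv_0. intros M.
  destruct (archimed (M * M)) as [H1 H2].
  exists (Z.to_nat (up (M * M))). intros n Hn.
  destruct (Rle_or_lt M 0). { assert (0 < sqrt (INR (S n))) by (apply sqrt_lt_R0, lt_0_INR; lia). lra. }
  assert (M * M < INR (S n)).
  { apply Rlt_le_trans with (IZR (up (M*M))). lra.
    assert (0 <= IZR (up (M*M))) by nra.
    assert (0 <= up (M*M))%Z. { apply le_IZR. auto. }
    rewrite <- (Z2Nat.id (up (M*M))) by auto. rewrite <- INR_IZR_INZ. apply le_INR. lia. }
  rewrite <- (sqrt_square M) by lra. apply sqrt_lt_1_alt. split. nra. lra.
Qed.

Lemma cv_iS : Un_cv (fun N => / INR (S N)) 0.
Proof. apply (cv_squeeze _ (fun N => / sqrt (INR (S N)))); [|apply cv_isqrt].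
  intros n. assert (1 <= INR (S n)) by (apply (le_INR 1); lia).
  assert (0 < sqrt (INR (S n))) by (apply sqrt_lt_R0; lra).
  assert (sqrt (INR (S n)) <= INR (S n)).
  { rewrite <- (sqrt_square (INR (S n))) at 2 by lra. apply sqrt_le_1_alt. nra. }
  split. apply Rlt_le, Rinv_0_lt_compat; lra. apply Rinv_le_contravar; lra. Qed.

Definition sp k q N := ssum (fun i => Ek i k / rising (S i) q) N.

Lemma sp_id0 p N : (1 <= p)%nat -> INR p * sp 0 (S p) N + / rising (S N) p = / rising 1 p.
Proof. intros Hp. induction N. unfold sp; simpl ssum. ring.
  unfold sp in *. cbn [ssum]. rewrite Ek_0.
  rewrite <- IHN. rewrite <- (rising_key (S N) p) by lia. unfold Rdiv. ring. Qed.

Lemma sp_idS k p N : (1 <= p)%nat ->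
  INR p * sp (S k) (S p) (S N) + Ek N (S k) / rising (S (S N)) p = sp k (S p) N.
Proof. intros Hp. induction N.
  - unfold sp; simpl ssum. rewrite Ek_0S. unfold Rdiv. ring.
  - unfold sp in *. cbn [ssum]. rewrite <- IHN. cbn [ssum].
    change (Ek (S N) (S k)) with (Ek N (S k) + Ek N k / INR (S N)).
    assert (K := rising_key (S (S N)) p ltac:(lia)).
    rewrite (rising_S (S N) p).
    assert (0 < rising (S (S N)) p) by (apply rising_pos; lia).
    assert (0 < rising (S (S N)) (S p)) by (apply rising_pos; lia).
    assert (0 < rising (S (S (S N))) p) by (apply rising_pos; lia).
    assert (0 < INR (S N)) by (apply lt_0_INR; lia).
    assert (HB : / rising (S (S (S N))) p = / rising (S (S N)) p - INR p / rising (S (S N)) (S p)) by lra.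
    unfold Rdiv at 5. rewrite HB. field. repeat split; lra.
Qed.

Definition Cq p k := / (INR (fact p) * INR p ^ (S k)).

Lemma sp_lim k p : (1 <= p)%nat -> Un_cv (sp k (S p)) (Cq p k).
Proof. intros Hp.
  assert (Pp : 0 < INR p) by (apply lt_0_INR; lia).
  assert (Pf : 0 < INR (fact p)) by (apply lt_0_INR, lt_O_fact).
  induction k.
  - apply (cv_ext (fun N => (/ rising 1 p - / rising (S N) p) * / INR p)).
    { intros N. rewrite <- (sp_id0 p N Hp). assert (0 < rising (S N) p) by (apply rising_pos; lia). field. split; lra. }
    replace (Cq p 0) with ((/ rising 1 p - 0) * / INR p).
    2:{ unfold Cq. rewrite rising_1. field. lra. }
    apply CV_mult; [|apply cv_const]. apply CV_minus. apply cv_const.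
    apply (cv_squeeze _ (fun N => / INR (S N))); [|apply cv_iS].
    intros n. assert (0 < INR (S n)) by (apply lt_0_INR; lia).
    assert (INR (S n) <= rising (S n) p) by (apply rising_ge; lia).
    split. apply Rlt_le, Rinv_0_lt_compat; lra. apply Rinv_le_contravar; lra.
  - apply cv_shift.
    apply (cv_ext (fun N => (sp k (S p) N - Ek N (S k) / rising (S (S N)) p) * / INR p)).
    { intros N. rewrite <- (sp_idS k p N Hp). assert (0 < rising (S (S N)) p) by (apply rising_pos; lia). field. split; lra. }
    replace (Cq p (S k)) with ((Cq p k - 0) * / INR p).
    2:{ unfold Cq. simpl pow. field. repeat split; try apply pow_nonzero; lra. }
    apply CV_mult; [|apply cv_const]. apply CV_minus. auto.
    apply (cv_squeeze _ (fun N => 4 ^ S k * / sqrt (INR (S N)))).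
    2:{ replace 0 with (4 ^ S k * 0) by ring. apply CV_mult. apply cv_const. apply cv_isqrt. }
    intros n. assert (0 < INR (S n)) by (apply lt_0_INR; lia).
    assert (INR (S (S n)) <= rising (S (S n)) p) by (apply rising_ge; lia).
    assert (Hb := Ek_bound (S k) n). assert (He := Ek_nonneg n (S k)).
    assert (Hs : 0 < sqrt (INR (S n))) by (apply sqrt_lt_R0; lra).
    assert (Hs2 : sqrt (INR (S n)) * sqrt (INR (S n)) = INR (S n)) by (apply sqrt_sqrt; lra).
    rewrite <- S_INR in Hb.
    assert (0 < 4 ^ S k) by (apply pow_lt; lra).
    assert (INR (S n) <= INR (S (S n))) by (apply le_INR; lia).
    split. apply Rdiv_le_0_compat; lra.
    apply Rle_trans with (4 ^ S k * sqrt (INR (S n)) / INR (S (S n))).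
    { unfold Rdiv. apply Rmult_le_compat; try lra. apply Rlt_le, Rinv_0_lt_compat; lra.
      apply Rinv_le_contravar; lra. }
    apply Rle_trans with (4 ^ S k * sqrt (INR (S n)) / INR (S n)).
    { unfold Rdiv. apply Rmult_le_compat_l. apply Rmult_le_pos; lra. apply Rinv_le_contravar; lra. }
    unfold Rdiv. rewrite <- Hs2 at 2. right. field. lra.
Qed.

Definition tp K q N := ssum (fun i => Ek (S i) K / rising (S i) q) N.

Lemma tp_id K q N : (1 <= K)%nat -> tp K q N = INR q * tp K (S q) N + sp K q (S N).
Proof. intros HK. unfold tp, sp. rewrite ssum_Sl. destruct K; [lia|]. rewrite Ek_0S.
  unfold Rdiv at 3. rewrite Rmult_0_l, Rplus_0_l. rewrite <- ssum_scal, <- ssum_plus.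
  apply ssum_ext. intros i Hi. unfold Rdiv at 1. rewrite <- (rising_key (S i) q) by lia.
  assert (0 < rising (S i) (S q)) by (apply rising_pos; lia).
  assert (0 < rising (S (S i)) q) by (apply rising_pos; lia).
  field. split; lra. Qed.

Lemma tp_grow K q : Un_growing (tp K q).
Proof. intros n. unfold tp. cbn [ssum].
  assert (0 <= Ek (S n) K / rising (S n) q). { apply Rdiv_le_0_compat. apply Ek_nonneg. apply rising_pos; lia. }
  lra. Qed.

Lemma sp_grow K q : Un_growing (sp K q).
Proof. intros n. unfold sp. cbn [ssum].
  assert (0 <= Ek n K / rising (S n) q). { apply Rdiv_le_0_compat. apply Ek_nonneg. apply rising_pos; lia. }
  lra. Qed.

Lemma tp_bound K p N : (1 <= K)%nat -> (1 <= p)%nat -> tp K (S p) N <= (INR (S p) + 1) * Cq p K.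
Proof. intros HK Hp.
  apply Rle_trans with ((INR (S p) + 1) * sp K (S p) (S N)).
  2:{ apply Rmult_le_compat_l. assert (0 <= INR (S p)) by apply pos_INR. lra.
      apply growing_ineq. apply sp_grow. apply sp_lim; auto. }
  unfold tp, sp. rewrite ssum_Sl. destruct K; [lia|]. rewrite Ek_0S.
  unfold Rdiv at 2. rewrite Rmult_0_l, Rplus_0_l. rewrite <- ssum_scal.
  clear HK. induction N. simpl; lra. cbn [ssum].
  apply Rplus_le_compat; auto.
  assert (A := rising_succ_le (S N) (S p) ltac:(lia)).
  assert (0 < rising (S N) (S p)) by (apply rising_pos; lia).
  assert (0 < rising (S (S N)) (S p)) by (apply rising_pos; lia).
  assert (E := Ek_nonneg (S N) (S K)).
  unfold Rdiv. rewrite <- Rmult_assoc. rewrite (Rmult_comm _ (Ek _ _)). rewrite Rmult_assoc.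
  apply Rmult_le_compat_l; auto.
  apply Rmult_le_reg_l with (rising (S (S N)) (S p)); auto.
  apply Rmult_le_reg_l with (rising (S N) (S p)); auto.
  replace (rising (S N) (S p) * (rising (S (S N)) (S p) * / rising (S N) (S p))) with (rising (S (S N)) (S p)) by (field; lra).
  replace (rising (S N) (S p) * (rising (S (S N)) (S p) * ((INR (S p) + 1) * / rising (S (S N)) (S p))))
    with ((INR (S p) + 1) * rising (S N) (S p)) by (field; lra).
  auto.
Qed.

Lemma tp_ex K p : exists l, (1 <= K)%nat -> (1 <= p)%nat -> Un_cv (tp K (S p)) l.
Proof.
  destruct (le_lt_dec 1 K); [|exists 0; intros; lia].
  destruct (le_lt_dec 1 p); [|exists 0; intros; lia].
  assert (H : has_ub (tp K (S p))).
  { exists ((INR (S p) + 1) * Cq p K). intros x [n ->]. apply tp_bound; auto. }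
  destruct (growing_cv _ (tp_grow K (S p)) H) as [lim Hl]. exists lim. auto.
Qed.

Definition Tf K p : R := proj1_sig (constructive_indefinite_description _ (tp_ex K p)).

Lemma Tf_cv K p : (1 <= K)%nat -> (1 <= p)%nat -> Un_cv (tp K (S p)) (Tf K p).
Proof. unfold Tf. destruct (constructive_indefinite_description _ (tp_ex K p)). simpl. auto. Qed.

Lemma Tf_rec K p : (1 <= K)%nat -> (1 <= p)%nat -> Tf K p = INR (S p) * Tf K (S p) + Cq p K.
Proof. intros HK Hp.
  apply (UL_sequence (tp K (S p))). { apply Tf_cv; auto. }
  apply (cv_ext (fun N => INR (S p) * tp K (S (S p)) N + sp K (S p) (S N))).
  { intros N. rewrite (tp_id K (S p) N); auto. }
  apply CV_plus. apply CV_mult. apply cv_const. apply Tf_cv; auto; lia.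
  apply cv_shift_fwd. apply sp_lim; auto.
Qed.

Definition U K p := INR (fact p) * Tf K p.

Lemma U_rec K p : (1 <= K)%nat -> (1 <= p)%nat -> U K p = U K (S p) + / INR p ^ S K.
Proof. intros HK Hp. unfold U. rewrite Tf_rec by auto. unfold Cq.
  change (fact (S p)) with (S p * fact p)%nat. rewrite mult_INR.
  assert (0 < INR p) by (apply lt_0_INR; lia).
  assert (0 < INR (fact p)) by (apply lt_0_INR, lt_O_fact).
  field. split. apply pow_nonzero; lra. lra. Qed.

Definition V K p := U K p + Hr (S K) (p - 1).

Lemma V_const K m : (1 <= K)%nat -> V K (S m) = V K 1.
Proof. intros HK. induction m; auto. rewrite <- IHm. unfold V.
  rewrite (U_rec K (S m)) by (auto; lia). simpl (S (S m) - 1)%nat. simpl (S m - 1)%nat.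
  destruct m. rewrite Nat.sub_diag. cbn [Hr]. ring.
  rewrite Nat.sub_0_r. cbn [Hr]. ring. Qed.

Lemma Tf_nonneg K p : (1 <= K)%nat -> (1 <= p)%nat -> 0 <= Tf K p.
Proof. intros. apply Rle_cv_lim with (Un := fun _ => 0) (Vn := tp K (S p)).
  intros n. unfold tp. induction n. simpl; lra. cbn [ssum].
  assert (0 <= Ek (S n) K / rising (S n) (S p)). { apply Rdiv_le_0_compat. apply Ek_nonneg. apply rising_pos; lia. }
  lra. apply cv_const. apply Tf_cv; auto. Qed.

Lemma U_bound K p : (1 <= K)%nat -> (1 <= p)%nat -> U K p <= 2 * Tf K 1 * / INR (S p).
Proof. intros HK Hp. unfold U.
  replace (2 * Tf K 1 * / INR (S p)) with ((2 * / INR (S p)) * Tf K 1) by ring.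
  apply Rle_cv_lim with (Un := fun N => INR (fact p) * tp K (S p) N) (Vn := fun N => (2 * / INR (S p)) * tp K 2 N).
  2:{ apply CV_mult. apply cv_const. apply Tf_cv; auto. }
  2:{ apply CV_mult. apply cv_const. apply Tf_cv; auto. }
  intros N. unfold tp. rewrite <- !ssum_scal. induction N. simpl; lra. cbn [ssum].
  apply Rplus_le_compat; auto.
  assert (R2 := rising_fact2 (S N) (S p) ltac:(lia) ltac:(lia)).
  assert (E2 : rising (S N) 2 = INR (S N) * INR (S (S N))).
  { cbn [rising]. rewrite Nat.add_0_r, Nat.add_1_r. ring. }
  rewrite E2. change (fact (S p)) with (S p * fact p)%nat in R2. rewrite mult_INR in R2.
  assert (0 < rising (S N) (S p)) by (apply rising_pos; lia).
  assert (0 < INR (S N)) by (apply lt_0_INR; lia).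
  assert (0 < INR (S (S N))) by (apply lt_0_INR; lia).
  assert (0 < INR (S p)) by (apply lt_0_INR; lia).
  assert (E := Ek_nonneg (S N) K).
  unfold Rdiv. 
  replace (2 * / INR (S p) * (Ek (S N) K * / (INR (S N) * INR (S (S N)))))
    with (Ek (S N) K * (2 / (INR (S p) * (INR (S N) * INR (S (S N)))))) by (field; lra).
  replace (INR (fact p) * (Ek (S N) K * / rising (S N) (S p)))
    with (Ek (S N) K * (INR (fact p) / rising (S N) (S p))) by (field; lra).
  apply Rmult_le_compat_l; auto.
  assert (0 < INR (fact p)) by (apply lt_0_INR, lt_O_fact).
  assert (0 < INR (S N) * INR (S (S N))) by (apply Rmult_lt_0_compat; lra).
  unfold Rdiv. apply Rmult_le_reg_l with (rising (S N) (S p)); auto.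
  apply Rmult_le_reg_l with (INR (S p) * (INR (S N) * INR (S (S N)))). nra.
  replace (INR (S p) * (INR (S N) * INR (S (S N))) * (rising (S N) (S p) * (INR (fact p) * / rising (S N) (S p))))
    with (INR (S p) * INR (fact p) * (INR (S N) * INR (S (S N)))) by (field; lra).
  replace (INR (S p) * (INR (S N) * INR (S (S N))) * (rising (S N) (S p) * (2 * / (INR (S p) * (INR (S N) * INR (S (S N)))))))
    with (2 * rising (S N) (S p)) by (field; lra).
  auto.
Qed.

Lemma sum_f_ssum f N : sum_f_R0 f N = ssum f (S N).
Proof. induction N; simpl. ring. rewrite IHN. auto. Qed.

Lemma V1_zeta K z : (1 <= K)%nat -> Un_cv (fun N => Hr (S K) N) z -> V K 1 = z.
Proof. intros HK Hz.
  apply (UL_sequence (fun m => V K (S m))).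
  - apply (cv_ext (fun _ => V K 1)). intros m. symmetry. apply V_const; auto. apply cv_const.
  - unfold V. replace z with (0 + z) by ring. apply CV_plus.
    + apply (cv_squeeze _ (fun m => 2 * Tf K 1 * / INR (S (S m)))).
      * intros m. split. unfold U. apply Rmult_le_pos. apply pos_INR. apply Tf_nonneg; auto; lia.
        apply U_bound; auto; lia.
      * replace 0 with (2 * Tf K 1 * 0) by ring. apply CV_mult. apply cv_const.
        apply (cv_shift_fwd (fun N => / INR (S N))). apply cv_iS.
    + apply (cv_ext (fun N => Hr (S K) N)); auto. intros m. simpl (S m - 1)%nat. rewrite Nat.sub_0_r. auto.
Qed.

Theorem mainTheorem7 (k q : nat) (hk : (1 <= k)%nat) (hq : (2 <= q)%nat)
  (zeta_k1 : R) (hzeta : Un_cv (fun N => Hr (S k) N) zeta_k1) :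
  infinite_sum
    (fun i => Ppoly k (fun r => Hr r (S i)) / rising (S i) q)
    (/ INR (fact (q - 1)) * (zeta_k1 - Hr (S k) (q - 2))).
Proof.
  destruct q as [|[|p]]; try lia.
  replace (S (S p) - 1)%nat with (S p) by lia. replace (S (S p) - 2)%nat with p by lia.
  assert (HT : Tf k (S p) = / INR (fact (S p)) * (zeta_k1 - Hr (S k) p)).
  { rewrite <- (V1_zeta k zeta_k1 hk hzeta). rewrite <- (V_const k p hk).
    unfold V, U. simpl (S p - 1)%nat. rewrite Nat.sub_0_r.
    assert (0 < INR (fact (S p))) by (apply lt_0_INR, lt_O_fact). field. lra. }
  rewrite <- HT.
  change (Un_cv (sum_f_R0 (fun i => Ppoly k (fun r => Hr r (S i)) / rising (S i) (S (S p)))) (Tf k (S p))).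
  apply (cv_ext (fun N => tp k (S (S p)) (S N))).
  { intros N. rewrite sum_f_ssum. unfold tp. apply ssum_ext. intros i _. rewrite Ppoly_Ek. auto. }
  apply (cv_shift_fwd (tp k (S (S p)))). apply Tf_cv; auto. lia.
Qed.
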